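(* Let a domain $v$ be a triple $(\mu^{(v)}, f^{(v)}, g^{(v)})$ with $\mu^{(v)}$ a distribution on inputs $\bm{x}\in\mathbb{R}^d$, $f^{(v)}:\mathbb{R}^d\to\mathbb{R}^{d'}$ ($d'\le d$) a representation function and $g^{(v)}:\mathbb{R}^{d'}\to\mathcal{Y}$ a stochastic labeling function; write $h^{(v)}=g^{(v)}\circ f^{(v)}$. Let $u$ be the unseen domain and $s$ a seen domain. For a hypothesis $h=g\circ f$ with $f:\mathbb{R}^d\to\mathbb{R}^{d'}$, $g:\mathbb{R}^{d'}\to\mathcal{Y}$, define the risk $R^{(v)}(h):=\mathbb{E}_{\bm{x}\sim\mu^{(v)}}[\ell(h(\bm{x}),h^{(v)}(\bm{x}))]$. Assume (i) the loss $\ell(\cdot,\cdot)$ is non-negative, symmetric, bounded by a finite positive number $L$, and satisfies the triangle inequality; and (ii) the representation function $f$ is invertible when restricted to the (intrinsically low-dimensional) data manifold, i.e. on the support of the input distributions. Then for any such hypothesis $h=g\circ f$, \[ R^{(u)}(h)\le R^{(s)}(h)+L\,\|f_{\#}\mu^{(u)}-f_{\#}\mu^{(s)}\|_1+\sigma^{(u,s)}, \] where $f_{\#}\mu^{(v)}$ is the pushforward of $\mu^{(v)}$ under $f$ (the distribution of $f(\bm{x})$ with $\bm{x}\sim\mu^{(v)}$), $\|f_{\#}\mu^{(u)}-f_{\#}\mu^{(s)}\|_1=\int|f_{\#}\mu^{(u)}-f_{\#}\mu^{(s)}|\,d\bm{x}$ is the $L^1$ distance between the pushforwards, and \[ \sigma^{(u,s)}:=\min\Big\{\mathbb{E}_{\bm{x}\sim\mu^{(u)}}[\ell(h^{(u)}(\bm{x}),h^{(s)}(\bm{x}))],\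 \mathbb{E}_{\bm{x}\sim\mu^{(s)}}[\ell(h^{(u)}(\bm{x}),h^{(s)}(\bm{x}))]\Big\}. \]
   Context: Domain generalization setting with one unseen domain $u$ and seen domains. $\sigma^{(u,s)}$ does not depend on the learned hypothesis $h$. The invertibility of $f$ is used to rewrite expectations over $\bm{x}$ as expectations over $\bm{z}=f(\bm{x})$ via $\bm{x}=f^{-1}(\bm{z})$. *)

(* Defs.v *)
From HB Require Import structures.
From mathcomp Require Import all_boot all_order all_algebra.
From mathcomp Require Import all_classical all_reals all_analysis.
Set Implicit Arguments. Unset Strict Implicit. Unset Printing Implicit Defensive.
Import Order.TTheory GRing.Theory Num.Theory.
Local Open Scope classical_set_scope.
Local Open Scope ring_scope.
Local Open Scope ereal_scope.

Definition risk d (X : measurableType d) (R : realType) dY (Y : measurableType dY)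
  (mu : {measure set X -> \bar R}) (ell : Y -> Y -> R) (h hv : X -> Y) : \bar R :=
  \int[mu]_x (ell (h x) (hv x))%:E.

Definition l1_dist d (Z : measurableType d) (R : realType)
  (lam : {measure set Z -> \bar R}) (p q : Z -> R) : \bar R :=
  \int[lam]_z (`| p z - q z |)%:E.

Definition sigma_us d (X : measurableType d) (R : realType) dY (Y : measurableType dY)
  (mu_u mu_s : {measure set X -> \bar R}) (ell : Y -> Y -> R) (h_u h_s : X -> Y) : \bar R :=
  mine (risk mu_u ell h_u h_s) (risk mu_s ell h_u h_s).

(* Main.v *)
Require Import Defs.
From HB Require Import structures.
From mathcomp Require Import all_boot all_order all_algebra.
From mathcomp Require Import all_classical all_reals all_analysis.
From mathcomp Require Import measurable_realfun.
From mathcomp Require Import lra.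
Import Order.TTheory GRing.Theory Num.Theory.
Local Open Scope classical_set_scope.
Local Open Scope ring_scope.

Import HBNNSimple.

Lemma dens_integral d (Z : measurableType d) (R : realType)
  (nu lam : {measure set Z -> \bar R}) (p : Z -> R)
  (mp : measurable_fun setT p) (p0 : forall z, 0 <= p z)
  (dens : forall A, measurable A -> nu A = (\int[lam]_(z in A) (p z)%:E)%E)
  (phi : Z -> R) (mphi : measurable_fun setT phi) (phi0 : forall z, 0 <= phi z) :
  (\int[nu]_z (phi z)%:E = \int[lam]_z (phi z * p z)%:E)%E.
Proof.
have mphiE : measurable_fun [set: Z] (fun z => (phi z)%:E) by exact/measurable_EFinP.
have phiE0 : forall z, setT z -> (0 <= (fun z => (phi z)%:E) z)%E by move=> z _; rewrite lee_fin.
pose fn := nnsfun_approx measurableT mphiE.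
have cv z : (EFin \o (fun n => fn n z)) @ \oo --> (phi z)%:E.
  exact: (cvg_nnsfun_approx measurableT mphiE phiE0 (x:=z)).
have nd z : {homo (fun n => fn n z) : n m / (n <= m)%N >-> n <= m}.
  by move=> a b ab; exact/lefP/nd_nnsfun_approx.
have step n : (\int[nu]_z (fn n z)%:E = \int[lam]_z (fn n z * p z)%:E)%E.
  set h := fn n.
  have mA y : measurable (h @^-1` [set y]).
    by have := measurable_funP h measurableT _ (measurable_set1 y); rewrite setTI.
  have mI y : measurable_fun [set: Z] (\1_(h @^-1` [set y]) : Z -> R).
    exact/measurable_indicP.
  transitivity (\sum_(y \in range h) (y%:E * nu (h @^-1` [set y])))%E.
    under eq_integral do rewrite fimfunE -fsumEFin//.
    rewrite ge0_integral_fsum//; last 2 first.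
    - by move=> y; apply/measurable_EFinP; apply: measurable_funM.
    - by move=> y x _; rewrite nnfun_muleindic_ge0.
    apply: eq_fsbigr => y _; rewrite integralZl_indic_nnsfun// (integral_indic nu measurableT (mA y)) setIT.
    by [].
  transitivity (\sum_(y \in range h) (y%:E * \int[lam]_z ((\1_(h @^-1` [set y]) z) * p z)%:E))%E.
    apply: eq_fsbigr => y _; rewrite dens// integral_mkcond; congr (_ * _)%E.
    apply: eq_integral => z _; rewrite patchE /indic; case: ifP => _ /=; rewrite ?mul1r ?mul0r //.
  under [RHS]eq_integral do rewrite fimfunE mulr_fsuml -fsumEFin//.
  rewrite ge0_integral_fsum//; last 2 first.
  - move=> y; apply/measurable_EFinP; apply: measurable_funM => //.
    exact: measurable_funM.
  - move=> y x _; rewrite lee_fin; have [y0|y0] := leP 0 y.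
      by rewrite !mulr_ge0//; exact: ler0n.
    by rewrite preimage_nnfun0// indic0 mulr0 mul0r.
  apply: eq_fsbigr => y; rewrite inE => -[x _ <-].
  rewrite -ge0_integralZl_EFin//.
  - by apply: eq_integral => z _; rewrite -EFinM mulrA.
  - by move=> z _; rewrite lee_fin mulr_ge0//; exact: ler0n.
  - by apply/measurable_EFinP; exact: measurable_funM.
have mfn n : measurable_fun [set: Z] (fun z => (fn n z)%:E).
  by apply/measurable_EFinP; exact: measurable_funP.
have mfnp n : measurable_fun [set: Z] (fun z => (fn n z * p z)%:E).
  by apply/measurable_EFinP; apply: measurable_funM => //; exact: measurable_funP.
have g0a n z (_ : [set: Z] z) : (0 <= (fn n z)%:E)%E by rewrite lee_fin.
have g0b n z (_ : [set: Z] z) : (0 <= (fn n z * p z)%:E)%E by rewrite lee_fin mulr_ge0.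
have nda z (_ : [set: Z] z) : {homo (fun n => (fn n z)%:E) : a b / (a <= b)%N >-> (a <= b)%E}.
  by move=> a b ab; rewrite lee_fin; exact: nd.
have ndb z (_ : [set: Z] z) : {homo (fun n => (fn n z * p z)%:E) : a b / (a <= b)%N >-> (a <= b)%E}.
  by move=> a b ab; rewrite lee_fin ler_wpM2r//; exact: nd.
have MC1 := monotone_convergence nu measurableT mfn g0a nda.
have MC2 := monotone_convergence lam measurableT mfnp g0b ndb.
transitivity (limn (fun n => \int[nu]_z (fn n z)%:E)%E).
  rewrite -MC1; apply: eq_integral => z _; apply/esym/cvg_lim => //; exact: cv.
transitivity (limn (fun n => \int[lam]_z (fn n z * p z)%:E)%E).
  by rewrite (funext step).
rewrite -MC2; apply: eq_integral => z _; apply/cvg_lim => //.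
rewrite EFinM; under eq_fun do rewrite EFinM.
apply: cvgeZr => //; exact: cv z.
Qed.

Theorem lemma1 (R : realType) (n n' : nat) (hn : (n' <= n)%N)
  (dY : measure_display) (Y : measurableType dY)
  (ell : Y -> Y -> R) (L : R)
  (ell_meas : measurable_fun [set: Y * Y] (fun p => ell p.1 p.2))
  (ell_ge0 : forall a b, 0 <= ell a b)
  (ell_sym : forall a b, ell a b = ell b a)
  (L_gt0 : 0 < L)
  (ell_le : forall a b, ell a b <= L)
  (ell_tri : forall a b c, ell a c <= ell a b + ell b c)
  (mu_u mu_s : probability (n.-tuple R) R)
  (f_u f_s : n.-tuple R -> n'.-tuple R) (g_u g_s : n'.-tuple R -> Y)
  (mf_u : measurable_fun [set: n.-tuple R] f_u)
  (mf_s : measurable_fun [set: n.-tuple R] f_s)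
  (mg_u : measurable_fun [set: n'.-tuple R] g_u)
  (mg_s : measurable_fun [set: n'.-tuple R] g_s)
  (f : n.-tuple R -> n'.-tuple R) (g : n'.-tuple R -> Y)
  (mf : measurable_fun [set: n.-tuple R] f)
  (mg : measurable_fun [set: n'.-tuple R] g)
  (M : set (n.-tuple R)) (mM : measurable M)
  (M_u : mu_u (~` M) = 0%E) (M_s : mu_s (~` M) = 0%E)
  (finv : n'.-tuple R -> n.-tuple R)
  (mfinv : measurable_fun [set: n'.-tuple R] finv)
  (finvK : forall x, M x -> finv (f x) = x)
  (lam : {measure set (n'.-tuple R) -> \bar R})
  (p_u p_s : n'.-tuple R -> R)
  (mp_u : measurable_fun [set: n'.-tuple R] p_u)
  (mp_s : measurable_fun [set: n'.-tuple R] p_s)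
  (p_u_ge0 : forall z, 0 <= p_u z) (p_s_ge0 : forall z, 0 <= p_s z)
  (p_u_dens : forall A, measurable A ->
     pushforward mu_u f A = (\int[lam]_(z in A) (p_u z)%:E)%E)
  (p_s_dens : forall A, measurable A ->
     pushforward mu_s f A = (\int[lam]_(z in A) (p_s z)%:E)%E) :
  (risk mu_u ell (g \o f) (g_u \o f_u)
   <= risk mu_s ell (g \o f) (g_s \o f_s)
      + L%:E * l1_dist lam p_u p_s
      + sigma_us mu_u mu_s ell (g_u \o f_u) (g_s \o f_s))%E.
Proof.
have mh : measurable_fun [set: n.-tuple R] (g \o f) by exact: measurableT_comp.
have mhu : measurable_fun [set: n.-tuple R] (g_u \o f_u) by exact: measurableT_comp.
have mhs : measurable_fun [set: n.-tuple R] (g_s \o f_s) by exact: measurableT_comp.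
have mell2 (a b : n.-tuple R -> Y) : measurable_fun setT a -> measurable_fun setT b ->
    measurable_fun [set: n.-tuple R] (fun x => ell (a x) (b x)).
  move=> ma mb.
  exact: (measurableT_comp ell_meas (measurable_fun_pair ma mb)).
have mell2' (a : n'.-tuple R -> Y) (b : n'.-tuple R -> Y) : measurable_fun setT a -> measurable_fun setT b ->
    measurable_fun [set: n'.-tuple R] (fun x => ell (a x) (b x)).
  move=> ma mb.
  exact: (measurableT_comp ell_meas (measurable_fun_pair ma mb)).
have conv (mu : probability (n.-tuple R) R) (p : n'.-tuple R -> R)
    (mp : measurable_fun setT p) (p0 : forall z, 0 <= p z)
    (dens : forall A, measurable A -> pushforward mu f A = (\int[lam]_(z in A) (p z)%:E)%E)
    (Mnull : mu (~` M) = 0%E) (k : n.-tuple R -> Y) (mk : measurable_fun setT k) :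
    (\int[mu]_x (ell ((g \o f) x) (k x))%:E =
     \int[lam]_z (ell (g z) (k (finv z)) * p z)%:E)%E.
  have mphi : measurable_fun [set: n'.-tuple R] (fun z => ell (g z) (k (finv z))).
    by apply: mell2' => //; exact: measurableT_comp.
  transitivity (\int[mu]_x (ell (g (f x)) (k (finv (f x))))%:E)%E.
    apply: ae_eq_integral => //.
    - by apply/measurable_EFinP; apply: mell2.
    - apply/measurable_EFinP; apply: mell2.
      + exact: (measurableT_comp mg mf).
      + exact: (measurableT_comp mk (measurableT_comp mfinv mf)).
    - exists (~` M); split => //; first exact: measurableC.
      move=> x /= nP Mx; apply: nP => _.
      by rewrite finvK.
  transitivity (\int[pushforward mu f]_z (ell (g z) (k (finv z)))%:E)%E.
    rewrite ge0_integral_pushforward//; first exact/measurable_EFinP.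
    all: try by move=> z _; rewrite lee_fin.
  exact: dens_integral.
have key (k : n.-tuple R -> Y) (mk : measurable_fun setT k) :
    (\int[mu_u]_x (ell ((g \o f) x) (k x))%:E <=
     \int[mu_s]_x (ell ((g \o f) x) (k x))%:E + L%:E * l1_dist lam p_u p_s)%E.
  rewrite (conv mu_u p_u)// (conv mu_s p_s)// /l1_dist.
  have mphi : measurable_fun [set: n'.-tuple R] (fun z => ell (g z) (k (finv z))).
    by apply: mell2' => //; exact: measurableT_comp.
  have mnorm : measurable_fun [set: n'.-tuple R] (fun z => `|p_u z - p_s z|).
    by apply: measurableT_comp; [exact: normr_measurable | exact: measurable_funB].
  rewrite -ge0_integralZl_EFin//; try (by move=> z _; rewrite lee_fin);
    try (by apply/measurable_EFinP); try (by apply: ltW).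
  rewrite -ge0_integralD//; try (by move=> z _; rewrite lee_fin mulr_ge0// ltW);
    try (by apply/measurable_EFinP; exact: measurable_funM).
  apply: ge0_le_integral => //.
  - by move=> z _; rewrite lee_fin mulr_ge0.
  - by apply/measurable_EFinP; exact: measurable_funM.
  - apply/measurable_EFinP; apply: measurable_funD; exact: measurable_funM.
  move=> z _; rewrite -EFinM -EFinD lee_fin.
  have h1 := ler_norm (p_u z - p_s z).
  have h2 := normr_ge0 (p_u z - p_s z).
  have h3 := ell_ge0 (g z) (k (finv z)).
  have h4 := ell_le (g z) (k (finv z)).
  nra.
rewrite /sigma_us /risk.
set Ru := (\int[mu_u]_x _)%E.
set Rs := (\int[mu_s]_x (ell ((g \o f) x) ((g_s \o f_s) x))%:E)%E.
set a := (\int[mu_u]_x (ell ((g_u \o f_u) x) ((g_s \o f_s) x))%:E)%E.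
set b := (\int[mu_s]_x (ell ((g_u \o f_u) x) ((g_s \o f_s) x))%:E)%E.
set Lt := (L%:E * l1_dist lam p_u p_s)%E.
have tri (mu : probability (n.-tuple R) R) :
    (\int[mu]_x (ell ((g \o f) x) ((g_u \o f_u) x))%:E <=
     \int[mu]_x (ell ((g \o f) x) ((g_s \o f_s) x))%:E +
     \int[mu]_x (ell ((g_u \o f_u) x) ((g_s \o f_s) x))%:E)%E.
  rewrite -ge0_integralD//; try (by move=> x _; rewrite lee_fin);
    try (by apply/measurable_EFinP; exact: mell2).
  apply: ge0_le_integral => //; try (by move=> x _; rewrite lee_fin);
    try (by apply/measurable_EFinP; exact: mell2).
  - by apply/measurable_EFinP; apply: measurable_funD; exact: mell2.
  move=> x _; rewrite -EFinD lee_fin (ell_sym ((g_u \o f_u) x)).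
  exact: ell_tri.
have A1 : (Ru <= Rs + Lt + a)%E.
  apply: (le_trans (tri mu_u)); rewrite -/a.
  by rewrite leeD2r// key.
have A2 : (Ru <= Rs + Lt + b)%E.
  apply: (le_trans (key _ mhu)); rewrite -/Lt.
  by rewrite addeAC leeD2r// (tri mu_s).
have [ab|ba] := leP a b.
  exact: A1.
exact: A2.
Qed.
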